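(* Let $|q|<1$, let $x\neq 0$ and $y$ be complex numbers, and let $n,m\ge 0$ be integers. Then $$\sum_{k=0}^n\sum_{l=0}^m {n\brack k}{m\brack l}(y;q)_k(y/x;q)_l\,x^l\,h_{n+m-k-l}(x,y|q)=\sum_{k=0}^n\sum_{l=0}^m {n\brack k}{m\brack l}(y;q)_k(y/x;q)_l\,(xq^k)^l\,h_{n-k}(x,y|q)\,h_{m-l}(x,y|q).$$
   Context: Throughout $|q|<1$. $(a;q)_n=\prod_{j=0}^{n-1}(1-aq^j)$ and ${n\brack k}=\frac{(q;q)_n}{(q;q)_k(q;q)_{n-k}}$. $P_n(x,y)=(x-y)(x-qy)\cdots(x-q^{n-1}y)$ with $P_0=1$, and $h_n(x,y|q)=\sum_{k=0}^n{n\brack k}P_k(x,y)$. (Note $(y/x;q)_l x^l$ is a polynomial in $x,y$.) *)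

(* Defs.v *)
From HB Require Import structures.
From mathcomp Require Import all_boot all_order all_algebra.
From mathcomp Require Import complex.
From mathcomp Require Import reals.
Set Implicit Arguments. Unset Strict Implicit. Unset Printing Implicit Defensive.
Import Order.TTheory GRing.Theory Num.Theory.
Local Open Scope ring_scope.

(* Complex numbers are modelled as R[i] (complex R) over an arbitrary realType R. *)
Section QDefs.
Variable C : fieldType.

Definition qpoch (a q : C) (n : nat) : C := \prod_(j < n) (1 - a * q ^+ j).

Definition qbinom (q : C) (n k : nat) : C :=
  qpoch q q n / (qpoch q q k * qpoch q q (n - k)).

Definition Pq (q x y : C) (n : nat) : C := \prod_(j < n) (x - q ^+ j * y).

Definition hq (q x y : C) (n : nat) : C :=
  \sum_(k < n.+1) qbinom q n k * Pq q x y k.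
End QDefs.

(* Main.v *)
Require Import Defs.
From HB Require Import structures.
From mathcomp Require Import all_boot all_order all_algebra.
From mathcomp Require Import complex reals.
From mathcomp Require Import ring zify.
From Stdlib Require Import Lia.
Import Order.TTheory GRing.Theory Num.Theory.
Local Open Scope ring_scope.

Section Q.
Variable C : fieldType.
Variable q : C.
Hypothesis Hq : forall n, qpoch q q n != 0.

Let f n := qpoch q q n.
Lemma fS n : f n.+1 = f n * (1 - q ^+ n.+1).
Proof. by rewrite /f /qpoch big_ord_recr /= exprS. Qed.
Lemma f0 : f 0 = 1. Proof. by rewrite /f /qpoch big_ord0. Qed.

Definition gb n k : C := if (k <= n)%N then f n / (f k * f (n - k)) else 0.

Lemma gb_out n k : (n < k)%N -> gb n k = 0.
Proof. by rewrite /gb ltnNge => /negbTE ->. Qed.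

Lemma gb_qb n k : (k <= n)%N -> qbinom q n k = gb n k.
Proof. by rewrite /gb => ->. Qed.

Lemma gb_n0 n : gb n 0 = 1.
Proof. rewrite /gb /= f0 subn0 mul1r divff //; exact: Hq. Qed.

Lemma gb_nn n : gb n n = 1.
Proof. rewrite /gb leqnn subnn f0 mulr1 divff //; exact: Hq. Qed.

Lemma gb_sym n k : (k <= n)%N -> gb n (n - k) = gb n k.
Proof. by move=> kn; rewrite /gb leq_subr kn subKn // (mulrC (f (n - k))). Qed.

Lemma pascal n k : gb n.+1 k.+1 = gb n k.+1 + q ^+ (n - k) * gb n k.
Proof.
case: (ltngtP k n) => hk.
- rewrite /gb ltnS hk (ltnW hk).
  have [d ->] : exists d, n = (k + d).+1 by exists (n - k).-1; lia.
  have -> : ((k + d).+2 - k.+1 = d.+1)%N by lia.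
  have -> : ((k + d).+1 - k.+1 = d)%N by lia.
  have -> : ((k + d).+1 - k = d.+1)%N by lia.
  rewrite (fS (k + d).+1) (fS k) (fS d).
  have e1 : 1 - q ^+ d.+1 != 0.
    by have := Hq d.+1; rewrite -/(f _) fS mulf_eq0 negb_or => /andP[].
  have e2 : 1 - q ^+ k.+1 != 0.
    by have := Hq k.+1; rewrite -/(f _) fS mulf_eq0 negb_or => /andP[].
  have h1 : f k != 0 := Hq k.
  have h2 : f d != 0 := Hq d.
  rewrite (_ : (k + d).+2 = (d.+1 + k.+1)%N); last by lia.
  rewrite exprD.
  by field; rewrite e1 h1 h2 e2.
- rewrite (@gb_out n.+1 k.+1) ?(@gb_out n k.+1) ?(@gb_out n k) ?mulr0 ?addr0 //; lia.
- rewrite hk gb_nn gb_out // subnn expr0 gb_nn; ring.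
Qed.

Lemma fnz n : f n != 0. Proof. exact: Hq. Qed.

Lemma gb_tri n k i : gb n k * gb (n - k) i = gb n i * gb (n - i) k.
Proof.
case: (leqP (k + i) n) => h.
- have h1 : (k <= n)%N by lia.
  have h2 : (i <= n - k)%N by lia.
  have h3 : (i <= n)%N by lia.
  have h4 : (k <= n - i)%N by lia.
  have h5 : (n - k - i = n - i - k)%N by lia.
  rewrite /gb h1 h2 h3 h4 h5.
  have := fnz n; have := fnz k; have := fnz i; have := fnz (n - k);
  have := fnz (n - i); have := fnz (n - i - k).
  move: (f n) (f k) (f i) (f (n - k)) (f (n - i)) (f (n - i - k)) => a b c d e g hg he hd hc hb ha.
  by field; rewrite hg hb he hc hd.
- case: (leqP k n) => hk; last first.
    rewrite (@gb_out n k) // mul0r (@gb_out (n - i) k) ?mulr0 //; lia.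
  rewrite (@gb_out (n - k) i) ?mulr0; last by lia.
  case: (leqP i n) => hi; last by rewrite (@gb_out n i) ?mul0r.
  by rewrite (@gb_out (n - i) k) ?mulr0 //; lia.
Qed.


Lemma sum_widen A a (F : nat -> C) : (a < A)%N ->
  \sum_(i < A) gb a i * F i = \sum_(i < a.+1) gb a i * F i.
Proof.
move=> h; rewrite (big_ord_widen A (fun i => gb a i * F i) h) [RHS]big_mkcond /=.
apply: eq_bigr => i _; case: ifP => // /negbT; rewrite -leqNgt => hi.
by rewrite (@gb_out a i) ?mul0r.
Qed.

Lemma sum_refl N (F : nat -> C) :
  \sum_(i < N.+1) gb N i * F i = \sum_(i < N.+1) gb N i * F (N - i)%N.
Proof.
rewrite (reindex_inj rev_ord_inj) /=; apply: eq_bigr => i _.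
have hi : (i <= N)%N by rewrite -ltnS.
by rewrite subSS gb_sym // subKn.
Qed.

Lemma sum_TS N (F : nat -> nat -> C) :
  \sum_(i < N.+1) \sum_(r < N.+1) gb N i * gb (N - i) r * F i r =
  \sum_(i < N.+1) \sum_(r < N.+1) gb N i * gb (N - i) r * F r i.
Proof.
rewrite exchange_big /=; apply: eq_bigr => i _; apply: eq_bigr => r _.
by rewrite gb_tri.
Qed.

Lemma sum_PS N (G : nat -> C) :
  \sum_(r < N.+2) gb N.+1 r * G r =
  \sum_(r < N.+1) gb N r * G r + \sum_(r < N.+1) gb N r * (q ^+ (N - r) * G r.+1).
Proof.
rewrite big_ord_recl /= gb_n0.
under eq_bigr => i _ do rewrite /bump /= pascal mulrDl.
rewrite big_split /= addrA; congr (_ + _); last first.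
  by apply: eq_bigr => i _; rewrite add1n; ring.
rewrite [RHS]big_ord_recl gb_n0 [in LHS]big_ord_recr /= (@gb_out N N.+1) // mul0r addr0.
congr (_ + _); apply: eq_bigr => i _; by rewrite /bump /= add1n.
Qed.

Lemma vandermonde a b (F : nat -> C) :
  \sum_(r < (a + b).+1) gb (a + b) r * F r =
  \sum_(i < a.+1) \sum_(j < b.+1) gb a i * gb b j * q ^+ ((a - i) * j) * F (i + j)%N.
Proof.
elim: b F => [|b IH] F.
  rewrite addn0; apply: eq_bigr => i _.
  by rewrite big_ord1 gb_n0 muln0 expr0 !mulr1 addn0.
rewrite addnS sum_PS IH (IH (fun r => q ^+ (a + b - r) * F r.+1)) -big_split /=.
apply: eq_bigr => i _.
rewrite (eq_bigr (fun j : 'I_b.+2 => gb b.+1 j * (gb a i * q ^+ ((a - i) * j) * F (i + j)%N))); last by move=> j _; ring.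
rewrite (sum_PS b (fun j => gb a i * q ^+ ((a - i) * j) * F (i + j)%N)) -!big_split /=; apply: eq_bigr => j _.
have hi : (i <= a)%N by rewrite -ltnS.
have hj : (j <= b)%N by rewrite -ltnS.
rewrite addnS.
have -> : q ^+ ((a - i) * j.+1) = q ^+ ((a - i) * j) * q ^+ (a - i) by rewrite mulnS exprD mulrC.
have -> : q ^+ (a + b - (i + j)) = q ^+ (a - i) * q ^+ (b - j) by rewrite -exprD; congr (_ ^+ _); lia.
ring.
Qed.

Definition cc r : C := \prod_(t < r) (- q ^+ t).

Lemma cauchy N x w :
  Pq q x w N = \sum_(r < N.+1) gb N r * (cc r * w ^+ r * x ^+ (N - r)).
Proof.
elim: N => [|N IH].
  by rewrite /Pq big_ord0 big_ord1 gb_n0 /cc big_ord0; ring.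
rewrite (sum_PS N (fun r => cc r * w ^+ r * x ^+ (N.+1 - r))) -big_split /=.
rewrite /Pq big_ord_recr /= -/(Pq q x w N) IH big_distrl /=.
apply: eq_bigr => r _.
have hr : (r <= N)%N by rewrite -ltnS.
rewrite /cc big_ord_recr /= -/(cc r) subSS subSn // exprS.
have -> : q ^+ N = q ^+ (N - r) * q ^+ r by rewrite -exprD subnK.
rewrite [w ^+ r.+1]exprS; move: (x ^+ (N - r)) (w ^+ r) (q ^+ (N - r)) (q ^+ r) (gb N r) (cc r) => A B D E F G; ring.
Qed.

Definition Gd a z x w := \sum_(i < a.+1) gb a i * (z ^+ (a - i) * Pq q x w i).
Definition Td N z x := \sum_(u < N.+1) gb N u * (z ^+ u * x ^+ (N - u)).

Lemma Td_sym N z x : Td N z x = Td N x z.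
Proof.
rewrite /Td (sum_refl N (fun u => z ^+ u * x ^+ (N - u))); apply: eq_bigr => u _.
have hu : (u <= N)%N by rewrite -ltnS.
by rewrite subKn // (mulrC (z ^+ _)).
Qed.

Lemma Gd_expand a z x w :
  Gd a z x w = \sum_(r < a.+1) gb a r * (cc r * w ^+ r * Td (a - r) z x).
Proof.
transitivity (\sum_(i < a.+1) \sum_(r < a.+1) gb a i * gb (a - i) r *
   (z ^+ i * (cc r * w ^+ r * x ^+ (a - i - r)))).
  rewrite /Gd (sum_refl a (fun i => z ^+ (a - i) * Pq q x w i)).
  apply: eq_bigr => i _.
  have hi : (i <= a)%N by rewrite -ltnS.
  have hlt : (a - i < a.+1)%N by lia.
  rewrite subKn // cauchy -(@sum_widen a.+1 (a - i) (fun r => cc r * w ^+ r * x ^+ (a - i - r)) hlt) big_distrr /=.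
  rewrite big_distrr /=; apply: eq_bigr => r _; ring.
have H := sum_TS a (fun i r => z ^+ i * (cc r * w ^+ r * x ^+ (a - i - r))).
cbv beta in H; rewrite H.
apply: eq_bigr => i _.
have hi : (i <= a)%N by rewrite -ltnS.
have hlt : (a - i < a.+1)%N by lia.
rewrite /Td -(@sum_widen a.+1 (a - i) (fun r => z ^+ r * x ^+ (a - i - r)) hlt) !big_distrr /=; apply: eq_bigr => r _.
rewrite subnAC.
move: (z ^+ r) (cc i) (w ^+ i) (x ^+ (a - i - r)) (gb a i) (gb (a - i) r) => A B D E F G; ring.
Qed.


Lemma Gd_sym a z x w : Gd a z x w = Gd a x z w.
Proof. by rewrite !Gd_expand; apply: eq_bigr => r _; rewrite Td_sym. Qed.

Lemma hq_gb x y N : hq q x y N = \sum_(k < N.+1) gb N k * Pq q x y k.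
Proof.
by apply: eq_bigr => k _; rewrite gb_qb // -ltnS.
Qed.

Lemma Pq_split x y i j : Pq q x y (j + i) = Pq q x y j * Pq q x (q ^+ j * y) i.
Proof.
rewrite /Pq big_split_ord /=; congr (_ * _); apply: eq_bigr => t _.
by rewrite exprD mulrA (mulrC (q ^+ j)).
Qed.

Lemma Pq_scale c y i : Pq q c (c * y) i = c ^+ i * qpoch y q i.
Proof.
rewrite /Pq /qpoch (_ : c ^+ i = \prod_(t < i) c); last by rewrite prodr_const card_ord.
rewrite -big_split /=.
by apply: eq_bigr => t _; ring.
Qed.

Lemma keyK a b x y : hq q x y (a + b) = \sum_(j < b.+1) gb b j *
  (Pq q x y j * \sum_(i < a.+1) gb a i * (x ^+ (a - i) * (q ^+ (i * j) * qpoch y q i))).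
Proof.
rewrite hq_gb vandermonde exchange_big /=; apply: eq_bigr => j _.
have := Gd_sym a (q ^+ j) x (q ^+ j * y); rewrite /Gd => H.
transitivity (gb b j * (Pq q x y j * \sum_(i < a.+1) gb a i * ((q ^+ j) ^+ (a - i) * Pq q x (q ^+ j * y) i))).
  rewrite !big_distrr /=; apply: eq_bigr => i _.
  rewrite addnC Pq_split -exprM mulnC; ring.
rewrite H; congr (_ * (_ * _)); apply: eq_bigr => i _.
by rewrite Pq_scale -exprM mulnC.
Qed.

Lemma h_alt x y N : hq q x y N = \sum_(i < N.+1) gb N i * (x ^+ (N - i) * qpoch y q i).
Proof.
rewrite -[N]addn0 keyK big_ord1 gb_n0 /Pq big_ord0 !mul1r addn0.
by apply: eq_bigr => i _; rewrite muln0 expr0 mul1r.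
Qed.

Definition Psi n m (P : nat -> nat -> nat -> nat -> C) :=
  \sum_(k < n.+1) \sum_(i < n.+1) gb n k * gb (n - k) i *
    \sum_(l < m.+1) \sum_(j < m.+1) gb m l * gb (m - l) j * P k i l j.

Lemma Psi_swap n m P : Psi n m P = Psi n m (fun k i l j => P i k j l).
Proof.
rewrite /Psi.
have H := sum_TS n (fun k i => \sum_(l < m.+1) \sum_(j < m.+1) gb m l * gb (m - l) j * P k i l j).
cbv beta in H; rewrite H.
apply: eq_bigr => k _; apply: eq_bigr => i _; congr (_ * _).
have H2 := sum_TS m (fun l j => P i k l j).
cbv beta in H2; exact: H2.
Qed.

Lemma Psi_nf n m P : Psi n m P =
  \sum_(k < n.+1) \sum_(l < m.+1) \sum_(i < n.+1) \sum_(j < m.+1)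
     gb n k * gb (n - k) i * (gb m l * gb (m - l) j * P k i l j).
Proof.
rewrite /Psi; apply: eq_bigr => k _.
under eq_bigr => i _ do rewrite big_distrr /=.
rewrite exchange_big /=; apply: eq_bigr => l _; apply: eq_bigr => i _.
by rewrite big_distrr.
Qed.

Lemma main_gb n m x y :
  \sum_(k < n.+1) \sum_(l < m.+1)
     gb n k * gb m l * qpoch y q k * Pq q x y l * hq q x y (n + m - k - l)
  = \sum_(k < n.+1) \sum_(l < m.+1)
     gb n k * gb m l * qpoch y q k * Pq q x y l * q ^+ (k * l)
       * hq q x y (n - k) * hq q x y (m - l).
Proof.
pose PL := fun k i l j : nat => qpoch y q k * Pq q x y l * Pq q x y j *
   x ^+ (n - k - i) * q ^+ (i * j) * qpoch y q i.
transitivity (Psi n m PL).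
  rewrite Psi_nf; apply: eq_bigr => k _; apply: eq_bigr => l _.
  have hk : (k <= n)%N by rewrite -ltnS.
  have hl : (l <= m)%N by rewrite -ltnS.
  have hnk : (n - k < n.+1)%N by lia.
  have hml : (m - l < m.+1)%N by lia.
  rewrite (_ : (n + m - k - l = (n - k) + (m - l))%N); last by lia.
  rewrite keyK.
  under eq_bigr => j _ do rewrite -(@sum_widen n.+1 (n - k) (fun i => x ^+ (n - k - i) * (q ^+ (i * j) * qpoch y q i)) hnk).
  rewrite -(@sum_widen m.+1 (m - l) (fun j => Pq q x y j * \sum_(i < n.+1) gb (n - k) i * (x ^+ (n - k - i) * (q ^+ (i * j) * qpoch y q i))) hml).
  rewrite [RHS]exchange_big /= big_distrr /=; apply: eq_bigr => j _.
  rewrite !big_distrr /=; apply: eq_bigr => i _.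
  rewrite /PL; ring.
rewrite Psi_swap Psi_nf; apply: eq_bigr => k _; apply: eq_bigr => l _.
have hk : (k <= n)%N by rewrite -ltnS.
have hl : (l <= m)%N by rewrite -ltnS.
have hnk : (n - k < n.+1)%N by lia.
have hml : (m - l < m.+1)%N by lia.
rewrite h_alt hq_gb.
rewrite -(@sum_widen n.+1 (n - k) (fun i => x ^+ (n - k - i) * qpoch y q i) hnk).
rewrite -(@sum_widen m.+1 (m - l) (fun j => Pq q x y j) hml).
rewrite [X in _ = X * _]big_distrr /= big_distrl /=; apply: eq_bigr => i _.
rewrite !big_distrr /=; apply: eq_bigr => j _.
rewrite /PL (_ : (n - i - k = n - k - i)%N); last by lia.
ring.
Qed.

End Q.

Lemma Pbeta (C : fieldType) (q x y : C) l : x != 0 ->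
  Pq q x y l = qpoch (y / x) q l * x ^+ l.
Proof.
move=> hx; rewrite /Pq /qpoch (_ : x ^+ l = \prod_(t < l) x); last by rewrite prodr_const card_ord.
rewrite -big_split /=; apply: eq_bigr => t _; by field.
Qed.

Local Open Scope complex_scope.

Theorem corollary3p2 (R : realType) (q x y : R[i]) (n m : nat)
  (hq1 : `|q| < 1) (hx : x != 0) :
  \sum_(k < n.+1) \sum_(l < m.+1)
     qbinom q n k * qbinom q m l * qpoch y q k * qpoch (y / x) q l * x ^+ l
       * hq q x y (n + m - k - l)
  = \sum_(k < n.+1) \sum_(l < m.+1)
     qbinom q n k * qbinom q m l * qpoch y q k * qpoch (y / x) q l
       * (x * q ^+ k) ^+ l * hq q x y (n - k) * hq q x y (m - l).
Proof.
have Hq : forall n, qpoch q q n != 0.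
  move=> N; apply/prodf_neq0 => j _; rewrite subr_eq0 -exprS.
  apply/negP => /eqP h.
  have e : `|q ^+ j.+1| = 1 by rewrite -h normr1.
  rewrite normrX in e.
  by have := exprn_ilt1 j.+1 (normr_ge0 q) hq1; rewrite e ltxx.
have M := main_gb _ q Hq n m x y.
transitivity (\sum_(k < n.+1) \sum_(l < m.+1)
     gb _ q n k * gb _ q m l * qpoch y q k * Pq q x y l * hq q x y (n + m - k - l)).
  apply: eq_bigr => k _; apply: eq_bigr => l _.
  have hk : (k <= n)%N by rewrite -ltnS.
  have hl : (l <= m)%N by rewrite -ltnS.
  rewrite (gb_qb _ _ _ _ hk) (gb_qb _ _ _ _ hl) (Pbeta _ q x y l hx).
  ring.
rewrite M; apply: eq_bigr => k _; apply: eq_bigr => l _.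
have hk : (k <= n)%N by rewrite -ltnS.
have hl : (l <= m)%N by rewrite -ltnS.
rewrite (gb_qb _ _ _ _ hk) (gb_qb _ _ _ _ hl) (Pbeta _ q x y l hx) exprMn -exprM.
ring.
Qed.
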